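(* Let $q=p^m$ with $p$ prime, let $\gamma$ be such that $\mathbb{F}_q=\mathbb{F}_p[\gamma]$, and let $t=\lfloor\frac{m-1}{4}\rfloor$. Let $n,k$ be integers with $5\le k\le\frac{n-2}{2}$ and $n\le p^t$. Let $g_1(x),\dots,g_n(x)\in\mathbb{F}_p[x]$ be pairwise distinct monic polynomials of degree exactly $t$, and set $\alpha_i=g_i(\gamma)$ for $1\le i\le n$. Let $C_{k-1,k-2}$ be the linear code over $\mathbb{F}_q$ generated by the $k\times n$ matrix whose rows are $(\alpha_1^{e},\dots,\alpha_n^{e})$ for $e=0,1,\dots,k-3,k,k+1$. If $p\nmid \frac{1}{12}k^2(k^2-1)$, then $C_{k-1,k-2}$ is an $[n,k]$ non-GRS MDS code over $\mathbb{F}_q$.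
   Context: Convention: $0^0=1$. Note $\frac{1}{12}k^2(k^2-1)$ is an integer. A linear code is MDS if its parameters $[n,k,d]$ satisfy $d=n-k+1$. For pairwise distinct $a_1,\dots,a_n\in\mathbb{F}_q$ and $w\in(\mathbb{F}_q^* )^n$, the generalized Reed–Solomon code is $GRS(n,k,\{a_i\},w)=\{(w_1f(a_1),\dots,w_nf(a_n)) : f\in\mathbb{F}_q[x],\ \deg f\le k-1\}$. Two codes are (monomially) equivalent if one is obtained from the other by a permutation of coordinates and multiplication of coordinates by nonzero scalars. A non-GRS MDS code is an MDS code not equivalent to any GRS code. *)

(* Defs.v *)
From HB Require Import structures.
From mathcomp Require Import all_boot all_order all_algebra all_fingroup all_field.
Set Implicit Arguments. Unset Strict Implicit. Unset Printing Implicit Defensive.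
Import GRing.Theory.
Local Open Scope ring_scope.

Section Codes.
Variable F : fieldType.

Definition wt n (c : 'rV[F]_n) : nat := #|[set i : 'I_n | c 0 i != 0]|.

(* The linear code generated by G is its row space: c is a codeword iff (c <= G)%MS. *)
Definition min_dist_eq k n (G : 'M[F]_(k, n)) (d : nat) : Prop :=
  (forall c : 'rV[F]_n, (c <= G)%MS -> c != 0 -> (d <= wt c)%N) /\
  (exists2 c : 'rV[F]_n, (c <= G)%MS && (c != 0) & wt c = d).

Definition is_nk_MDS k n (G : 'M[F]_(k, n)) : Prop :=
  \rank G = k /\ min_dist_eq G (n - k + 1).

Definition code_equiv k1 k2 n (A : 'M[F]_(k1, n)) (B : 'M[F]_(k2, n)) : Prop :=
  exists (s : 'S_n) (v : 'I_n -> F), (forall i, v i != 0) /\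
    (A == B *m (perm_mx s *m diag_mx (\row_i v i)))%MS.

Definition GRSmx k n (a : 'I_n -> F) (w : 'I_n -> F) : 'M[F]_(k, n) :=
  \matrix_(j < k, i < n) (w i * a i ^+ j).

Definition is_GRS_equiv k n (A : 'M[F]_(k, n)) : Prop :=
  exists (k' : nat) (a : 'I_n -> F) (w : 'I_n -> F),
    injective a /\ (forall i, w i != 0) /\ code_equiv A (GRSmx k' a w).

Definition is_nonGRS_MDS k n (A : 'M[F]_(k, n)) : Prop :=
  is_nk_MDS A /\ ~ is_GRS_equiv A.

Definition expo (k j : nat) : nat := if (j < k - 2)%N then j else (j + 2)%N.

Definition Ckmx k n (a : 'I_n -> F) : 'M[F]_(k, n) :=
  \matrix_(j < k, i < n) (a i ^+ expo k j).

End Codes.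

Definition Fp_embed (F : fieldType) (p : nat) (c : 'F_p) : F := (val c)%:R.
Definition poly_Fp_eval (F : fieldType) (p : nat) (g : {poly 'F_p}) (x : F) : F :=
  (map_poly (@Fp_embed F p) g).[x].

(* Main.v *)
Require Import Defs.
From HB Require Import structures.
From mathcomp Require Import all_boot all_order all_algebra all_fingroup all_field.
From mathcomp Require Import zify ring.

Lemma binid k : (2 <= k)%N ->
  ('C(k, 2) * 'C(k, 2) = k * 'C(k, 3) + (k ^ 2 * (k ^ 2 - 1)) %/ 12)%N.
Proof.
move=> k2.
have h2 : ('C(k, 2) * 2 = k * (k - 1))%N.
  by rewrite -[2]/(2`!) bin_ffact !ffactnS ffactn0 muln1 subn1.
have h3 : ('C(k, 3) * 6 = k * ((k - 1) * (k - 2)))%N.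
  by rewrite -[6]/(3`!) bin_ffact !ffactnS ffactn0 muln1 -!subn1 -subnDA.
set a := 'C(k, 2) in h2 *; set b := 'C(k, 3) in h3 *.
have E : (12 * (a * a) = 12 * (k * b) + k ^ 2 * (k ^ 2 - 1))%N.
  have -> : (12 * (a * a) = 3 * ((a * 2) * (a * 2)))%N by ring.
  have -> : (12 * (k * b) = 2 * k * (b * 6))%N by ring.
  rewrite h2 h3.
  case: k k2 {h2 h3 a b} => [|[|j]] // _.
  have -> : (j.+2 - 1 = j.+1)%N by lia.
  have -> : (j.+2 - 2 = j)%N by lia.
  have -> : (j.+2 ^ 2 - 1 = j.+1 * j.+3)%N by rewrite expnS expn1; lia.
  rewrite expnS expn1; ring.
set N := (k ^ 2 * (k ^ 2 - 1))%N in E *.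
set aa := (a * a)%N in E *; set kb := (k * b)%N in E *.
have -> : N = (12 * (aa - kb))%N by lia.
rewrite mulKn //; lia.
Qed.

Set Implicit Arguments. Unset Strict Implicit. Unset Printing Implicit Defensive.
Import GRing.Theory.
Local Open Scope ring_scope.

Section Emb.
Variables (F : fieldType) (p : nat).
Hypothesis pr : prime p.
Hypothesis pF : p \in [pchar F].

Lemma natF_mod n : (n %% p)%:R = n%:R :> F.
Proof.
by rewrite {2}(divn_eq n p) natrD natrM (pcharf0 pF) mulr0 add0r.
Qed.

Lemma Fp_embed_nat n : Fp_embed F (n%:R : 'F_p) = n%:R.
Proof. rewrite /Fp_embed /=. have := val_Fp_nat pr n. move=> ->. by rewrite natF_mod. Qed.

Lemma Fp_valE (c : 'F_p) : c = (val c)%:R.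
Proof. by rewrite natr_Zp. Qed.

Lemma Fp_val_lt (b : 'F_p) : (val b < p)%N.
Proof. rewrite -[p in (_ < p)%N](Fp_cast pr); exact: ltn_ord. Qed.

Lemma Fp_embed_is_zmod : zmod_morphism (@Fp_embed F p).
Proof.
move=> a b; rewrite (Fp_valE a) (Fp_valE b).
have hb := ltnW (Fp_val_lt b).
have -> : (val a)%:R - (val b)%:R = (val a + (p - val b))%:R :> 'F_p.
  by rewrite natrD natrB // (pcharf0 (pchar_Fp pr)) sub0r.
rewrite !Fp_embed_nat natrD natrB // (pcharf0 pF) sub0r.
by [].
Qed.

Lemma Fp_embed_is_monoid : monoid_morphism (@Fp_embed F p).
Proof.
split; first by rewrite -(natr_Zp 1) /= Fp_embed_nat /Fp_embed.
move=> a b; rewrite (Fp_valE a) (Fp_valE b) -natrM !Fp_embed_nat natrM.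
by [].
Qed.

HB.instance Definition _ := GRing.isZmodMorphism.Build _ _ _ Fp_embed_is_zmod.
HB.instance Definition _ := GRing.isMonoidMorphism.Build _ _ _ Fp_embed_is_monoid.


Variable gamma : F.
Definition phi (_ : prime p) (_ : p \in [pchar F]) (h : {poly 'F_p}) : F := poly_Fp_eval h gamma.
Local Notation ph := (phi pr pF).

Lemma phi_is_zmod : zmod_morphism ph.
Proof. by move=> a b; rewrite /phi /poly_Fp_eval rmorphB hornerD hornerN. Qed.
Lemma phi_is_monoid : monoid_morphism ph.
Proof.
split; first by rewrite /phi /poly_Fp_eval rmorph1 hornerC.
by move=> a b; rewrite /phi /poly_Fp_eval rmorphM hornerM.
Qed.
HB.instance Definition _ := GRing.isZmodMorphism.Build _ _ ph phi_is_zmod.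
HB.instance Definition _ := GRing.isMonoidMorphism.Build _ _ ph phi_is_monoid.

End Emb.

Section Count.
Variables (F : finFieldType) (p m : nat) (gamma : F).
Hypothesis pr : prime p.
Hypothesis pF : p \in [pchar F].
Hypothesis cardF : #|F| = (p ^ m)%N.
Hypothesis gen : forall x : F, exists h : {poly 'F_p}, x = poly_Fp_eval h gamma.

Lemma phi_neq0 (h : {poly 'F_p}) : h != 0 -> (size h <= m)%N -> phi gamma pr pF h != 0.
Proof.
move=> h0 hs; apply/negP => /eqP ph0.
have gen' : forall x : F, exists q : {poly 'F_p}, x == phi gamma pr pF q.
  by move=> x; have [q ->] := gen x; exists q.
pose r x := (xchoose (gen' x)) %% h.
have rE y : phi gamma pr pF (r y) = y.
  have /eqP {2}-> := xchooseP (gen' y).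
  by rewrite [in RHS](divp_eq (xchoose (gen' y)) h) rmorphD rmorphM /= ph0 mulr0 add0r.
have rs y : (size (r y) <= (size h).-1)%N.
  by rewrite -ltnS prednK ?ltn_modpN0 // lt0n size_poly_eq0.
pose f x : 'rV['F_p]_((size h).-1) := \row_(i < (size h).-1) (r x)`_i.
have finj : injective f.
  move=> x y fxy; rewrite -(rE x) -(rE y); congr phi.
  apply/polyP => i; case: (ltnP i (size h).-1) => hi.
    by move/matrixP: fxy => /(_ 0 (Ordinal hi)); rewrite !mxE.
  by rewrite !nth_default // (leq_trans (rs _) hi).
have := leq_card f finj; rewrite card_mx cardF card_Fp // mul1n.
rewrite leq_exp2l ?prime_gt1 //.
have : (0 < size h)%N by rewrite lt0n size_poly_eq0.
move: hs; case: (size h) => [|s] //= hs _; apply/negP; rewrite -ltnNge.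
exact: leq_trans hs.
Qed.
End Count.

Section Top.
Variable A : comNzRingType.

Lemma bndM (p q : {poly A}) a b :
  (size p <= a.+1)%N -> (size q <= b.+1)%N ->
  (size (p * q)%R <= (a + b).+1)%N /\ (p * q)`_(a + b) = p`_a * q`_b.
Proof.
move=> hp hq; split.
  apply: leq_trans (size_polyMleq p q) _.
  have := leq_add hp hq; lia.
rewrite coefM (bigD1 (@Ordinal (a + b).+1 a (leq_addr b a))) //= addKn big1 ?addr0 //.
move=> [j hj] /=; rewrite -val_eqE /= => hja.
case: (ltngtP j a) hja => // hja _.
  rewrite [q`_ _]nth_default ?mulr0 //; apply: leq_trans hq _.
  by rewrite ltn_subRL ltn_add2r.
by rewrite [p`_ _]nth_default ?mul0r //; apply: leq_trans hp _.
Qed.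

Lemma prodT (t : nat) (gs : seq {poly A}) :
  (forall g, g \in gs -> (size g <= t.+1)%N /\ g`_t = 1) ->
  forall j, (j <= size gs)%N ->
  leq (size (\prod_(g <- gs) ('X - g%:P))`_(size gs - j)%N) (j * t)%N.+1 /\
  (\prod_(g <- gs) ('X - g%:P))`_(size gs - j)%N`_(j * t)%N = (-1) ^+ j * ('C(size gs, j))%:R.
Proof.
elim: gs => [|g gs IH] hg j hj.
  move: hj; rewrite leqn0 => /eqP -> /=.
  by rewrite big_nil coef1 /= size_poly1 coef1 /= expr0 mul1r.
have IH' := IH (fun g' hg' => hg g' (@mem_behead _ (g :: gs) _ hg')).
set s := size gs; rewrite big_cons /=.
set R := \prod_(g0 <- gs) ('X - g0%:P).
have sR : size R = s.+1 by rewrite size_prod_XsubC.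
case: j hj => [|j'] hj.
  rewrite subn0.
  have mon : ('X - g%:P) * R \is monic by rewrite monicMl ?monicXsubC ?monic_prod_XsubC.
  have sz : size (('X - g%:P) * R) = s.+2.
    by rewrite size_monicM ?monicXsubC ?monic_neq0 ?monic_prod_XsubC // size_XsubC sR.
  have := monicP mon; rewrite lead_coefE sz /= => ->.
  by rewrite size_poly1 coef1 /= expr0 mul1r bin0.
have hj' : (j' <= s)%N by [].
rewrite subSS mulrBl coefB coefXM coefCM.
have [T1s T1c] : leq (size (if (s - j' == 0)%N then 0 else R`_(s - j').-1)) (j'.+1 * t)%N.+1 /\
   (if (s - j' == 0)%N then 0 else R`_(s - j').-1)`_(j'.+1 * t)%N = (-1) ^+ j'.+1 * ('C(s, j'.+1))%:R.
  case: eqP => e.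
    have -> : j' = s by apply/eqP; rewrite eqn_leq hj' -subn_eq0 e.
    by rewrite size_poly0 coef0 bin_small // mulr0.
  have lt : (j' < s)%N by rewrite -subn_gt0 lt0n; apply/eqP.
  have -> : (s - j').-1 = (s - j'.+1)%N by rewrite subnS.
  exact: IH'.
have [T2s T2c] := IH' j' hj'.
have [hgs hgt] := hg g (mem_head _ _).
have [Ms Mc] := bndM hgs T2s.
split.
  apply: leq_trans (size_polyD _ _) _; rewrite size_polyN geq_max T1s.
  by rewrite mulSn.
rewrite coefB T1c mulSn Mc hgt mul1r T2c binS natrD exprS.
ring.
Qed.
End Top.

Section Gen.
Variable F : fieldType.

Definition spoly r (e : 'I_r -> nat) (c : 'I_r -> F) : {poly F} :=
  \sum_(j < r) c j *: 'X^(e j).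

Lemma spoly_horner r e c x : (@spoly r e c).[x] = \sum_(j < r) c j * x ^+ e j.
Proof. by rewrite /spoly horner_sum; apply: eq_bigr => j _; rewrite hornerZ hornerXn. Qed.

Lemma spoly_coef r e c i : (@spoly r e c)`_i = \sum_(j < r) c j * (i == e j)%:R.
Proof. by rewrite /spoly coef_sum; apply: eq_bigr => j _; rewrite coefZ coefXn. Qed.

Lemma spoly_coefE r e c j0 : injective e -> (@spoly r e c)`_(e j0) = c j0.
Proof.
move=> ei; rewrite spoly_coef (bigD1 j0) //= eqxx mulr1 big1 ?addr0 //.
by move=> j hj; rewrite (inj_eq ei) eq_sym (negbTE hj) mulr0.
Qed.

Lemma spoly_coef0 r e c i : (forall j, e j != i) -> (@spoly r e c)`_i = 0.
Proof.
by move=> h; rewrite spoly_coef big1 // => j _; rewrite eq_sym (negbTE (h j)) mulr0.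
Qed.

Lemma spoly_size r e c N : (forall j, (e j < N)%N) -> (size (@spoly r e c) <= N)%N.
Proof.
move=> h; apply/leq_sizeP => i hi; apply: spoly_coef0 => j.
by apply/eqP => ej; have := h j; rewrite ej ltnNge hi.
Qed.

Lemma spoly_eq0 r e c : injective e -> @spoly r e c = 0 -> forall j, c j = 0.
Proof. by move=> ei h j; rewrite -(spoly_coefE c j ei) h coef0. Qed.

Lemma coef_small_mul (h P : {poly F}) i : (size h <= 2)%N ->
  (h * P)`_i.+1 = h`_0 * P`_i.+1 + h`_1 * P`_i.
Proof.
move=> hs; rewrite coefM big_ord_recl big_ord_recl /= big1.
  by rewrite addr0 subn0 subSS subn0.
move=> j _; rewrite [h`_ _]nth_default ?mul0r //.
by apply: leq_trans hs _; rewrite /bump /=; lia.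
Qed.

Lemma expo_inj k : injective (expo k).
Proof.
move=> a b; rewrite /expo; case: ifP; case: ifP; lia.
Qed.

Lemma keyA k (beta : 'I_k -> F) (c : 'I_k -> F) : (3 <= k)%N -> injective beta ->
  let P := \prod_(x <- [seq beta l | l <- enum 'I_k]) ('X - x%:P) in
  P`_(k - 2) ^+ 2 - P`_(k - 1) * P`_(k - 3) != 0 ->
  (forall l, \sum_(j < k) c j * beta l ^+ expo k j = 0) -> forall j, c j = 0.
Proof.
move=> k3 binj P D0 hc.
have einj : injective (fun j : 'I_k => expo k j).
  by move=> a b /expo_inj /val_inj.
apply: (spoly_eq0 einj).
set f := spoly _ c.
have rts : all (root f) [seq beta l | l <- enum 'I_k].
  by apply/allP => x /mapP [l _ ->]; rewrite /root spoly_horner hc.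
have un : uniq_roots [seq beta l | l <- enum 'I_k].
  by rewrite uniq_rootsE map_inj_uniq ?enum_uniq.
have dv := uniq_roots_dvdp rts un.
have sP : size P = k.+1 by rewrite size_prod_XsubC size_map size_enum_ord.
have P0 : P != 0 by rewrite -size_poly_eq0 sP.
have fE := divpK dv; set h := f %/ _ in fE.
have sf : (size f <= k.+2)%N.
  apply: spoly_size => j; rewrite /expo; case: (ltnP j (k - 2)) => hj; have := ltn_ord j; lia.
have sh : (size h <= 2)%N.
  by rewrite size_divp // sP /= leq_subLR addn2.
have e1 : f`_(k - 2).+1 = 0.
  apply: spoly_coef0 => j; apply/eqP; rewrite /expo; case: (ltnP j (k - 2)) => hj; have := ltn_ord j; lia.
have e2 : f`_(k - 3).+1 = 0.
  apply: spoly_coef0 => j; apply/eqP; rewrite /expo; case: (ltnP j (k - 2)) => hj; have := ltn_ord j; lia.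
rewrite -fE in e1 e2.
rewrite coef_small_mul // in e1.
rewrite coef_small_mul // in e2.
rewrite -/P in e1 e2.
have k32 : (k - 3).+1 = (k - 2)%N by lia.
rewrite k32 in e2.
have k21 : (k - 2).+1 = (k - 1)%N by lia.
rewrite k21 in e1.
set P1 := P`_(k - 1) in e1 D0; set P2 := P`_(k - 2) in e1 e2 D0; set P3 := P`_(k - 3) in e2 D0.
have h1 : h`_1 = 0.
  have : h`_1 * (P2 ^+ 2 - P1 * P3) = 0.
    transitivity (P2 * (h`_0 * P1 + h`_1 * P2) - P1 * (h`_0 * P2 + h`_1 * P3)); first by ring.
    by rewrite e1 e2 !mulr0 subrr.
  by move/eqP; rewrite mulf_eq0 (negbTE D0) orbF => /eqP.
have h0 : h`_0 = 0.
  have : h`_0 * (P2 ^+ 2 - P1 * P3) = 0.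
    transitivity (P2 * (h`_0 * P2 + h`_1 * P3) - P3 * (h`_0 * P1 + h`_1 * P2)); first by ring.
    by rewrite e1 e2 !mulr0 subrr.
  by move/eqP; rewrite mulf_eq0 (negbTE D0) orbF => /eqP.
have hz : h = 0.
  apply/polyP => i; rewrite coef0; case: i => [|[|i]] //.
  by rewrite nth_default //; apply: leq_trans sh _.
by rewrite -fE hz mul0r.
Qed.
End Gen.

Section MDS.
Variable F : fieldType.

Lemma nz_entry a b (M : 'M[F]_(a, b)) : M != 0 -> exists i j, M i j != 0.
Proof.
move=> M0; case: (pickP (fun ij : 'I_a * 'I_b => M ij.1 ij.2 != 0)) => [[i j] h|h].
  by exists i, j.
move: M0; have -> : M = 0.
  by apply/matrixP => i j; rewrite mxE; have := h (i, j); rewrite /= => /negbFE/eqP.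
by rewrite eqxx.
Qed.

Lemma ker_nz r s (A : 'M[F]_(r, s)) : (s < r)%N -> exists2 x : 'rV_r, x != 0 & x *m A = 0.
Proof.
move=> sr; set K := kermx A; have : K != 0.
  rewrite -mxrank_eq0 mxrank_ker; have := rank_leq_col A; lia.
move/nz_entry => [i [j ij]]; exists (row i K).
  by apply/eqP => /matrixP /(_ 0 j); rewrite mxE [RHS]mxE => e; move: ij; rewrite e eqxx.
by apply/sub_kermxP; exact: row_sub.
Qed.

Variables (k n : nat) (G : 'M[F]_(k, n)).
Hypothesis kn : (k <= n)%N.
Hypothesis Hsub : forall s : 'I_k -> 'I_n, injective s ->
  forall x : 'rV_k, (forall l, (x *m G) 0 (s l) = 0) -> x = 0.

Lemma G_inj (x : 'rV_k) : x *m G = 0 -> x = 0.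
Proof.
move=> h; apply: (Hsub (s := widen_ord kn)).
  by move=> a b /(congr1 val) /= /val_inj.
by move=> l; rewrite h mxE.
Qed.

Lemma G_rank : \rank G = k.
Proof.
apply/eqP; rewrite -[_ == _]/(row_free G) -kermx_eq0; set K := kermx G; apply/negPn/negP.
move/nz_entry => [i [j ij]].
have : row i K *m G = 0 by apply/sub_kermxP; exact: row_sub.
move/G_inj/matrixP/(_ 0 j); rewrite mxE [RHS]mxE => e; by move: ij; rewrite e eqxx.
Qed.

Lemma G_wt (c : 'rV_n) : (c <= G)%MS -> c != 0 -> (n - k + 1 <= wt c)%N.
Proof.
move=> /submxP [x ->] c0; rewrite leqNgt; apply/negP => hw.
set Z := [set i : 'I_n | (x *m G) 0 i == 0].
have hZ : (k <= #|Z|)%N.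
  have := cardsC Z; rewrite card_ord.
  have -> : ~: Z = [set i | (x *m G) 0 i != 0] by apply/setP => i; rewrite !inE.
  rewrite /wt in hw; set w := #|[set i | (x *m G) 0 i != 0]| in hw *; lia.
pose s (l : 'I_k) : 'I_n := enum_val (Ordinal (leq_trans (ltn_ord l) hZ) : 'I_#|Z|).
have sinj : injective s by move=> a b /enum_val_inj [] /val_inj.
have x0 : x = 0.
  apply: (Hsub sinj) => l; have := enum_valP (Ordinal (leq_trans (ltn_ord l) hZ) : 'I_#|Z|).
  by rewrite inE => /eqP.
by move: c0; rewrite x0 mul0mx eqxx.
Qed.

Lemma G_MDS : (0 < k)%N -> is_nk_MDS G.
Proof.
move=> k0; split; first exact: G_rank.
split; first exact: G_wt.
have kn' : (k.-1 <= n)%N by lia.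
pose s (l : 'I_k.-1) : 'I_n := widen_ord kn' l.
have kk : (k.-1 < k)%N by lia.
have [x x0 hx] := ker_nz (\matrix_(i < k, l < k.-1) G i (s l)) kk.
exists (x *m G).
  rewrite submxMl /=; apply/negP => /eqP /G_inj; exact/eqP.
apply/eqP; rewrite eqn_leq andbC G_wt ?submxMl //; last first.
  by apply/negP => /eqP /G_inj; exact/eqP.
set Z := [set i : 'I_n | (x *m G) 0 i == 0].
have hZ : (k.-1 <= #|Z|)%N.
  have -> : k.-1 = #|[set s l | l in 'I_k.-1]|.
    by rewrite card_imset ?card_ord // => a b /(congr1 val) /= /val_inj.
  apply: subset_leq_card; apply/subsetP => i /imsetP [l _ ->]; rewrite inE.
  have /matrixP /(_ 0 l) := hx; rewrite mxE [RHS]mxE => e.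
  apply/eqP; rewrite mxE; apply: etrans e; apply: eq_bigr => j _; by rewrite mxE.
have := cardsC Z; rewrite card_ord.
have -> : ~: Z = [set i | (x *m G) 0 i != 0] by apply/setP => i; rewrite !inE.
rewrite /wt; set w := #|[set i | (x *m G) 0 i != 0]|; lia.
Qed.
End MDS.

Section NonGRS.
Variable F : fieldType.

Lemma roots_zero n (b : 'I_n -> F) (f : {poly F}) : injective b ->
  (size f <= n)%N -> (forall i, f.[b i] = 0) -> f = 0.
Proof.
move=> bi sf h; apply: (@roots_geq_poly_eq0 _ _ [seq b i | i <- enum 'I_n]).
- by apply/allP => x /mapP [i _ ->]; rewrite /root h.
- by rewrite map_inj_uniq ?enum_uniq.
- by rewrite size_map size_enum_ord.
Qed.

Definition eps k (r : nat) : nat := if (r < 2 * k - 1)%N then r else (2 * k)%N.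

Lemma eps_inj k : (0 < k)%N -> {in [pred r | r < 2 * k]%N &, injective (eps k)}.
Proof. move=> k0 a b; rewrite !inE /eps; case: ifP; case: ifP; lia. Qed.

Lemma expo_lo k j : (j < k - 2)%N -> expo k j = j.
Proof. by rewrite /expo => ->. Qed.
Lemma expo_hi k j : (k - 2 <= j)%N -> expo k j = (j + 2)%N.
Proof. by rewrite /expo ltnNge => ->. Qed.
Lemma eps_lo k r : (r < 2 * k - 1)%N -> eps k r = r.
Proof. by rewrite /eps => ->. Qed.
Lemma eps_hi k r : (2 * k - 1 <= r)%N -> eps k r = (2 * k)%N.
Proof. by rewrite /eps ltnNge => ->. Qed.

Lemma expo_dec k r : (5 <= k)%N -> (r < 2 * k)%N ->
  exists x1 x2, [/\ (x1 < k)%N, (x2 < k)%N & (expo k x1 + expo k x2 = eps k r)%N].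
Proof.
move=> k5 rk.
case: (ltnP r (k - 2)) => h1.
  exists r, 0%N.
  have -> : expo k (r) = (r)%N by apply: expo_lo; lia.
  have -> : expo k (0) = (0)%N by apply: expo_lo; lia.
  have -> : eps k r = r by apply: eps_lo; lia.
  split; lia.
case: (ltnP r k) => h2.
  exists (k - 3)%N, (r + 3 - k)%N.
  have -> : expo k (k - 3) = (k - 3)%N by apply: expo_lo; lia.
  have -> : expo k (r + 3 - k) = (r + 3 - k)%N by apply: expo_lo; lia.
  have -> : eps k r = r by apply: eps_lo; lia.
  split; lia.
case: (ltnP r (2 * k - 2)) => h3.
  exists (k - 2)%N, (r - k)%N.
  have -> : expo k (k - 2) = (k - 2 + 2)%N by apply: expo_hi; lia.
  have -> : expo k (r - k) = (r - k)%N by apply: expo_lo; lia.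
  have -> : eps k r = r by apply: eps_lo; lia.
  split; lia.
case: (ltnP r (2 * k - 1)) => h4.
  exists (k - 1)%N, (k - 3)%N.
  have -> : expo k (k - 1) = (k - 1 + 2)%N by apply: expo_hi; lia.
  have -> : expo k (k - 3) = (k - 3)%N by apply: expo_lo; lia.
  have -> : eps k r = r by apply: eps_lo; lia.
  split; lia.
exists (k - 2)%N, (k - 2)%N.
have -> : expo k (k - 2) = (k - 2 + 2)%N by apply: expo_hi; lia.
  have -> : eps k r = (2 * k)%N by apply: eps_hi; lia.
split; lia.
Qed.

Variables (n k : nat) (alpha : 'I_n -> F).
Hypothesis ainj : injective alpha.
Hypothesis k5 : (5 <= k)%N.
Hypothesis kn : (2 * k + 2 <= n)%N.
Hypothesis rankA : \rank (Ckmx k alpha) = k.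

Lemma rank_inj r t (M : 'M[F]_(r, t)) : (forall x : 'rV_r, x *m M = 0 -> x = 0) -> \rank M = r.
Proof.
move=> Minj; suff : row_free M by move/eqP.
rewrite -kermx_eq0; set K := kermx M.
apply/negPn/negP; move/nz_entry => [i [j ij]].
have : row i K *m M = 0 by apply/sub_kermxP; exact: row_sub.
move/Minj/matrixP/(_ 0 j); rewrite mxE [RHS]mxE => e; by move: ij; rewrite e eqxx.
Qed.

Section Code.
Variables (k' : nat) (u b : 'I_n -> F).
Hypothesis binj : injective b.
Let BM := \matrix_(l < k', i < n) (u i * b i ^+ l).

Lemma sub_BM (c : 'rV_n) : (c <= BM)%MS ->
  exists2 f : {poly F}, (size f <= k')%N & forall i, c 0 i = u i * f.[b i].
Proof.
move=> /submxP [y ->]; exists (spoly (fun l : 'I_k' => val l) (y 0)).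
  by apply: spoly_size => j; exact: ltn_ord.
move=> i; rewrite spoly_horner mxE mulr_sumr; apply: eq_bigr => l _.
by rewrite mxE; ring.
Qed.

Lemma BM_sub m (H : 'M_(m, n)) (g : {poly F}) (v : 'I_n -> F) : (size g <= m)%N ->
  H = \matrix_(l < m, i < n) (v i * b i ^+ l) ->
  ((\row_i (v i * g.[b i])%R) <= H)%MS.
Proof.
move=> sg ->; apply/submxP; exists (\row_(l < m) g`_l).
apply/matrixP => z i; rewrite ord1 !mxE (horner_coef_wide _ sg) mulr_sumr.
by apply: eq_bigr => l _; rewrite !mxE; ring.
Qed.

Hypothesis u0 : forall i, u i != 0.

Lemma BM_rank : (k < k')%N -> (k.+1 <= \rank BM)%N.
Proof.
move=> kk.
pose B' := \matrix_(l < k.+1, i < n) (u i * b i ^+ l).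
have B'BM : (B' <= BM)%MS.
  apply/row_subP => l.
  have -> : row l B' = \row_i (u i * ('X^l).[b i]).
    by apply/rowP => i; rewrite !mxE hornerXn.
  by apply: (BM_sub (m := k')) => //; rewrite size_polyXn; apply: leq_trans kk.
apply: leq_trans (mxrankS B'BM); rewrite (rank_inj (M := B')) //.
move=> y hy; apply/rowP => l; rewrite mxE.
have inj : injective (fun l : 'I_k.+1 => val l) by move=> x1 x2 /val_inj.
apply: (spoly_eq0 inj); apply: (roots_zero binj).
  apply: spoly_size => j /=; have := ltn_ord j; lia.
move=> i; have /rowP /(_ i) := hy; rewrite !mxE => e.
apply/eqP; rewrite -(mulrI_eq0 _ (mulfI (u0 i))) spoly_horner mulr_sumr; apply/eqP.
by rewrite -[RHS]e; apply: eq_bigr => j _; rewrite mxE; ring.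
Qed.
End Code.

Lemma nonGRS : ~ is_GRS_equiv (Ckmx k alpha).
Proof.
move=> [k' [a [w [ainj' [w0 [s [v [v0 eq]]]]]]]].
set A := Ckmx k alpha in eq.
pose u i := w (s^-1 i)%g * v i.
pose b i := a (s^-1 i)%g.
have u0 i : u i != 0 by rewrite mulf_neq0.
have binj : injective b by move=> x y /ainj' /perm_inj.
set BM := \matrix_(l < k', i < n) (u i * b i ^+ l).
have BME : GRSmx k' a w *m (perm_mx s *m diag_mx (\row_i v i)) = BM.
  rewrite mulmxA -[s in perm_mx s](invgK s) -col_permE mul_mx_diag.
  by apply/matrixP => l i; rewrite !mxE /u /b; ring.
rewrite BME in eq.
have rBM : \rank BM = k by rewrite -(eqmx_rank eq) rankA.
have kk : (k' <= k)%N.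
  rewrite leqNgt; apply/negP => kk; have := BM_rank binj u0 kk; rewrite -/BM rBM ltnn.
  done.
pose K' := \matrix_(r < 2 * k, i < n) (alpha i ^+ eps k r).
have rK : \rank K' = (2 * k)%N.
  apply: rank_inj => y hy; apply/rowP => r; rewrite mxE.
  have inj : injective (fun r : 'I_(2 * k) => eps k r).
    move=> x1 x2 e; apply: val_inj; move: e; rewrite /eps /=.
    have := ltn_ord x1; have := ltn_ord x2.
    case: (ltnP x1 (2 * k - 1)) => ?; case: (ltnP x2 (2 * k - 1)) => ?; lia.
  apply: (spoly_eq0 inj); apply: (roots_zero ainj).
    apply: spoly_size => j; rewrite /eps /=; have := ltn_ord j.
    case: (ltnP j (2 * k - 1)) => ?; lia.
  move=> i; have /rowP /(_ i) := hy; rewrite !mxE => e.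
  by rewrite spoly_horner -[RHS]e; apply: eq_bigr => j _; rewrite mxE.
set H := \matrix_(l < (2 * k' - 1), i < n) (u i ^+ 2 * b i ^+ l).
have K'H : (K' <= H)%MS.
  apply/row_subP => r.
  have [x1 [x2 [h1 h2 h12]]] := expo_dec k5 (ltn_ord r).
  have rowA (x : nat) : (x < k)%N -> exists2 f : {poly F}, (size f <= k')%N &
      forall i, alpha i ^+ expo k x = u i * f.[b i].
    move=> hx; have := row_sub (Ordinal hx) A; move/(submx_trans)/(_ (proj1 (andP eq))) => hs.
    have [f sf hf] := sub_BM hs; exists f => // i; rewrite -hf !mxE //.
  have [f1 sf1 hf1] := rowA x1 h1.
  have [f2 sf2 hf2] := rowA x2 h2.
  have -> : row r K' = \row_i (u i ^+ 2 * (f1 * f2).[b i]).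
    apply/rowP => i; rewrite !mxE -h12 exprD hf1 hf2 hornerM; ring.
  apply: (BM_sub (m := (2 * k' - 1)%N)) => //.
  apply: leq_trans (size_polyMleq _ _) _; lia.
have := mxrankS K'H; rewrite rK; have := rank_leq_row H; lia.
Qed.
End NonGRS.

Unset Implicit Arguments.
Theorem theorem3p8 (F : finFieldType) (p m : nat) (gamma : F)
  (n k : nat) (g : 'I_n -> {poly 'F_p}) :
  prime p -> p \in [pchar F] -> #|F| = (p ^ m)%N ->
  (forall x : F, exists h : {poly 'F_p}, x = poly_Fp_eval h gamma) ->
  (5 <= k)%N -> (2 * k <= n - 2)%N -> (n <= p ^ ((m - 1) %/ 4))%N ->
  (forall i, g i \is monic) -> (forall i, size (g i) = ((m - 1) %/ 4).+1) ->
  injective g ->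
  ~~ (p %| (k ^ 2 * (k ^ 2 - 1)) %/ 12)%N ->
  is_nonGRS_MDS (Ckmx k (fun i => poly_Fp_eval (g i) gamma)).
Proof.
move=> pr pF cardF gen k5 hn hnp gmon gsz ginj hdiv.
set t := ((m - 1) %/ 4)%N in hnp gsz.
set alpha := fun i => poly_Fp_eval (g i) gamma.
pose ph := phi gamma pr pF.
have alphaE i : alpha i = ph (g i) by [].
have t1 : (1 <= t)%N.
  rewrite lt0n; apply/negP => /eqP t0; move: hnp; rewrite t0 expn0; lia.
have tm : (4 * t + 1 <= m)%N by rewrite /t in t1 *; lia.
have ainj : injective alpha.
  move=> i j e; apply: ginj; apply/eqP/negPn/negP => nz0.
  have nz : g i - g j != 0.
    by rewrite subr_eq0.
  have sz : (size (g i - g j)%R <= m)%N.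
    apply: leq_trans (size_polyD _ _) _; rewrite size_polyN !gsz maxnn; lia.
  have := phi_neq0 pr pF cardF gen nz sz.
  by rewrite rmorphB /= -!/(ph _) -!alphaE e subrr eqxx.
have Dnz (s : 'I_k -> 'I_n) :
  let P := \prod_(x <- [seq alpha (s l) | l <- enum 'I_k]) ('X - x%:P) in
  P`_(k - 2) ^+ 2 - P`_(k - 1) * P`_(k - 3) != 0.
  move=> P.
  set gs := [seq g (s l) | l <- enum 'I_k].
  set R := \prod_(h <- gs) ('X - h%:P).
  have PR : P = map_poly ph R.
    rewrite /P /R rmorph_prod !big_map; apply: eq_bigr => l _.
    by rewrite /= map_polyXsubC.
  have hgs : forall h, h \in gs -> (size h <= t.+1)%N /\ h`_t = 1.
    move=> h /mapP [l _ ->]; rewrite gsz; split => //.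
    by have /monicP := gmon (s l); rewrite lead_coefE gsz.
  have sgs : size gs = k by rewrite size_map size_enum_ord.
  have hj1 : (1 <= size gs)%N by rewrite sgs; lia.
  have [s1 c1] := prodT hgs hj1.
  have hj2 : (2 <= size gs)%N by rewrite sgs; lia.
  have [s2 c2] := prodT hgs hj2.
  have hj3 : (3 <= size gs)%N by rewrite sgs; lia.
  have [s3 c3] := prodT hgs hj3.
  rewrite sgs -/R in s1 c1 s2 c2 s3 c3.
  rewrite PR !coef_map -rmorphXn -rmorphM -rmorphB.
  have [sA cA] := bndM s2 s2.
  have [sB cB] := bndM s1 s3.
  have e : (1 * t + 3 * t = 2 * t + 2 * t)%N by lia.
  rewrite e in sB cB.
  have hc : (R`_(k - 2) ^+ 2 - R`_(k - 1) * R`_(k - 3))`_(2 * t + 2 * t) =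
      ((k ^ 2 * (k ^ 2 - 1)) %/ 12)%:R.
    rewrite coefB expr2 cA cB c1 c2 c3 bin1.
    have k2 : (2 <= k)%N by lia.
    have := binid k k2 => /(congr1 (fun x => x%:R : 'F_p)).
    rewrite natrD !natrM => E; rewrite -[RHS](addKr (k%:R * 'C(k, 3)%:R)) -E; ring.
  apply: (phi_neq0 pr pF cardF gen).
    apply/negP => /eqP Q0; move: hc; rewrite Q0 coef0 => /esym/eqP.
    by rewrite -(dvdn_pcharf (pchar_Fp pr)) (negbTE hdiv).
  rewrite expr2; apply: leq_trans (size_polyD _ _) _; rewrite size_polyN geq_max.
  by rewrite (leq_trans sA) ?(leq_trans sB) //; lia.
have MDS : is_nk_MDS (Ckmx k alpha).
  apply: G_MDS; last by lia.
    by lia.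
  move=> s sinj x hx; apply/rowP => j; rewrite [RHS]mxE.
  have binj : injective (fun l => alpha (s l)) by move=> a b /ainj /sinj.
  have k3 : (2 < k)%N by lia.
  apply: (keyA k3 binj (Dnz s)) => l.
  rewrite -[RHS](hx l) mxE; apply: eq_bigr => j' _; by rewrite mxE.
split => //.
have kn : (2 * k + 2 <= n)%N by lia.
exact: (nonGRS ainj k5 kn MDS.1).
Qed.
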